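(* Let $q_1,q_2,\dots$ be probabilities with $\sum_iq_i=1$ and let $\mathcal{M}=\sum_iq_i\mathcal{M}_i$ be the mechanism that runs $\mathcal{M}_i$ with probability $q_i$. Fix data sets $d,d'$ and suppose $T(\mathcal{M}_i(d),\mathcal{M}_i(d'))\ge f_i$ for trade-off functions with $f_1\le f_2\le f_3\le\cdots$ pointwise. Let $f(\alpha)=\inf\{\sum_iq_if_i(\alpha_i):\alpha_i\in[0,1],\ \sum_iq_i\alpha_i=\alpha\}$ and, for an index $t$, $p_t=\sum_{i<t}q_i$. Then for all $\alpha\in[0,1]$, $$T(\mathcal{M}(d),\mathcal{M}(d'))(\alpha)\ge f(\alpha)\ge f_t(\min\{1,\alpha+p_t\}).$$
   Context: For distributions $P,Q$ on a common space, $T(P,Q)(\alpha)=\inf_\phi\{1-\mathbb{E}_Q[\phi]:\mathbb{E}_P[\phi]\le\alpha\}$, infimum over measurable $\phi$ with values in $[0,1]$. A trade-off function is a convex, continuous, non-increasing $f:[0,1]\to[0,1]$ with $f(\alpha)\le1-\alpha$. The mixture mechanism outputs $\mathcal{M}(d)=\sum_iq_i\mathcal{M}_i(d)$ (the index $i$ is not revealed). *)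

(* Defs.v *)
From HB Require Import structures.
From mathcomp Require Import all_boot all_order all_algebra.
From mathcomp Require Import all_classical all_reals all_analysis.
Set Implicit Arguments. Unset Strict Implicit. Unset Printing Implicit Defensive.
Import Order.TTheory GRing.Theory Num.Theory numFieldNormedType.Exports.
Local Open Scope classical_set_scope.
Local Open Scope ring_scope.

Definition tradeoff (d : measure_display) (T : measurableType d) (R : realType)
  (P Q : probability T R) (alpha : R) : \bar R :=
  ereal_inf [set (1 - \int[Q]_x (phi x)%:E)%E | phi in
     [set phi : T -> R | [/\ measurable_fun setT phi,
        (forall x, 0 <= phi x <= 1) &
        (\int[P]_x (phi x)%:E <= alpha%:E)%E]]].

Definition is_tradeoff_fun (R : realType) (f : R -> R) : Prop :=
  [/\ (forall x y l : R, 0 <= x <= 1 -> 0 <= y <= 1 -> 0 <= l <= 1 ->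
         f (l * x + (1 - l) * y) <= l * f x + (1 - l) * f y),
      {within `[0, 1], continuous f},
      (forall x y : R, 0 <= x <= 1 -> 0 <= y <= 1 -> x <= y -> f y <= f x),
      (forall x : R, 0 <= x <= 1 -> 0 <= f x <= 1) &
      (forall x : R, 0 <= x <= 1 -> f x <= 1 - x)].

Definition mix_lower (R : realType) (q : nat -> R) (fs : nat -> R -> R) (alpha : R)
  : \bar R :=
  ereal_inf [set (\sum_(i <oo) (q i * fs i (a i))%:E)%E | a in
     [set a : nat -> R | (forall i, 0 <= a i <= 1) /\
        (\sum_(i <oo) (q i * a i)%:E)%E = alpha%:E]].

(* Main.v *)
Require Import Defs.
From HB Require Import structures.
From mathcomp Require Import all_boot all_order all_algebra.
From mathcomp Require Import all_classical all_reals all_analysis.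
From mathcomp Require Import ring lra.
From mathcomp Require Import measurable_realfun.
Import Order.TTheory GRing.Theory Num.Theory.
Local Open Scope classical_set_scope.
Local Open Scope ring_scope.
Lemma jensen (R : realType) (f : R -> R)
  (Hc : forall x y l : R, 0 <= x <= 1 -> 0 <= y <= 1 -> 0 <= l <= 1 ->
         f (l * x + (1 - l) * y) <= l * f x + (1 - l) * f y)
  (w y : nat -> R) (hw : forall i, 0 <= w i) (hy : forall i, 0 <= y i <= 1) n :
  forall c, 0 <= c <= 1 -> \sum_(i < n) w i <= 1 ->
  f ((1 - \sum_(i < n) w i) * c + \sum_(i < n) w i * y i)
   <= (1 - \sum_(i < n) w i) * f c + \sum_(i < n) w i * f (y i).
Proof.
elim: n => [|n IH] c hc hW.
  by rewrite !big_ord0 subr0 !mul1r !addr0.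
move: hW; rewrite !big_ord_recr /= => hW.
set W := \sum_(i < n) w i in hW *.
set Z := \sum_(i < n) w i * y i.
set F := \sum_(i < n) w i * f (y i).
have Wge0 : 0 <= W by apply: sumr_ge0 => i _.
have wn0 := hw n.
have hW' : W <= 1 by lra.
have [s0|s0] := eqVneq (1 - W) 0.
  have -> : w n = 0 by lra.
  rewrite !mul0r !addr0; exact: IH.
have sp : 0 < 1 - W by rewrite lt_neqAle eq_sym s0 /=; lra.
pose l := (1 - W - w n) / (1 - W).
have hl : 0 <= l <= 1.
  apply/andP; split; first by apply: divr_ge0; lra.
  by rewrite ler_pdivrMr //; lra.
pose c' := l * c + (1 - l) * y n.
have e1 : (1 - W) * c' = (1 - W - w n) * c + w n * y n.
  rewrite /c' /l; field; lra.
have hc' : 0 <= c' <= 1.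
  have := hy n; rewrite /c'; move: hl hc => /andP[? ?] /andP[? ?] /andP[? ?].
  apply/andP; split; nra.
have := IH c' hc' hW'; rewrite e1 => H1.
have H2 := Hc c (y n) l hc (hy n) hl.
have e2 : (1 - W) * (l * f c + (1 - l) * f (y n)) = (1 - W - w n) * f c + w n * f (y n).
  rewrite /l; field; lra.
have H3 : (1 - W) * f c' <= (1 - W - w n) * f c + w n * f (y n).
  by rewrite -e2 ler_wpM2l //; lra.
have -> : (1 - (W + w n)) * c + (Z + w n * y n) = (1 - W - w n) * c + w n * y n + Z by lra.
apply: (le_trans H1).
have -> : (1 - (W + w n)) * f c + (F + w n * f (y n)) = ((1 - W - w n) * f c + w n * f (y n)) + F by ring.
by rewrite lerD2r.
Qed.
Lemma psum_le_series (R : realType) (u : nat -> R) N : (forall i, 0 <= u i) ->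
  ((\sum_(i < N) u i)%:E <= \sum_(i <oo) (u i)%:E)%E.
Proof.
move=> u0; rewrite -sumEFin -(big_mkord xpredT (fun i => (u i)%:E)).
by apply: nneseries_lim_ge => n _ _; rewrite lee_fin.
Qed.

Lemma exists_big (R : realType) (u : nat -> R) x : (forall i, 0 <= u i) ->
  (\sum_(i <oo) (u i)%:E)%E = x%:E -> forall e : R, 0 < e ->
  exists N, forall M, (N <= M)%N -> x - e < \sum_(i < M) u i.
Proof.
move=> u0 hs e e0.
have hom := @ereal_nondecreasing_series R (fun i => (u i)%:E) xpredT 0
   (fun n _ _ => (u0 n : (0 <= (u n)%:E)%E)).
have hl := cvg_lim (@ereal_hausdorff R) (ereal_nondecreasing_cvgn hom).
have : ((x - e)%:E < ereal_sup (range (fun n => \sum_(0 <= i < n | true) (u i)%:E)))%E.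
  rewrite -hl hs lte_fin; lra.
case/ereal_sup_gt => _ [N _ <-] hN.
exists N => M NM.
have := le_lt_trans (lexx _) (lt_le_trans hN (hom _ _ NM)).
by rewrite big_mkord sumEFin lte_fin.
Qed.

Lemma part2 (R : realType) (q : nat -> R) (fs : nat -> R -> R)
  (hq0 : forall i, 0 <= q i)
  (hq1 : (\sum_(i <oo) (q i)%:E)%E = 1%E)
  (hf : forall i, is_tradeoff_fun (fs i))
  (hmono : forall i j (alpha : R), (i <= j)%N -> 0 <= alpha <= 1 ->
          fs i alpha <= fs j alpha)
  (t : nat) (alpha : R) (halpha : 0 <= alpha <= 1) :
  ((fs t (Num.min 1 (alpha + \sum_(i < t) q i)))%:E <= mix_lower q fs alpha)%E.
Proof.
apply/ereal_infP => _ [a [ha hsum] <-].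
have fge0 : forall i x, 0 <= x <= 1 -> 0 <= fs i x.
  by move=> i x hx; case: (hf i) => _ _ _ h _; by case/andP: (h x hx).
have [hconv _ hmon hrng hle] := hf t.
have ft1 : fs t 1 = 0.
  have := hle 1; have := hrng 1; rewrite lexx ler01 /= => /(_ isT) /andP[h1 _] /(_ isT).
  rewrite subrr => h2; apply/eqP; rewrite eq_le h1 h2 //.
have psum_le : forall N, \sum_(i < N) q i <= 1.
  by move=> N; rewrite -lee_fin -hq1; apply: psum_le_series.
set p := \sum_(i < t) q i.
have p0 : 0 <= p by apply: sumr_ge0.
set m := Num.min 1 (alpha + p).
have hm : 0 <= m <= 1.
  apply/andP; split; first by rewrite le_min ler01 /=; lra.
  by rewrite ge_min lexx.
apply/lee_addgt0Pr => e e0.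
have [N HN] := @exists_big R q 1 hq0 hq1 e e0.
pose M := maxn N t.
have hM := HN M (leq_maxl N t).
have tM : (t <= M)%N by apply: leq_maxr.
pose yy i := if (i < t)%N then 1 else a i.
have hy : forall i, 0 <= yy i <= 1 by move=> i; rewrite /yy; case: ifP => _ //; rewrite lexx ler01.
have J := @jensen R (fs t) hconv q yy hq0 hy M 0 (ltac:(by rewrite lexx ler01) : 0 <= 0 <= 1) (psum_le M).
rewrite mulr0 add0r in J.
set X := \sum_(i < M) q i * yy i in J.
have X0 : 0 <= X by apply: sumr_ge0 => i _; apply: mulr_ge0 => //; by case/andP: (hy i).
have X1 : X <= \sum_(i < M) q i.
  apply: ler_sum => i _; rewrite -[leRHS]mulr1; apply: ler_wpM2l => //; by case/andP: (hy i).
have X2 : X <= alpha + p.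
  apply: (le_trans (y := \sum_(i < M) (q i * a i + (if (i < t)%N then q i else 0)))).
    rewrite /X; apply: ler_sum => k _; rewrite /yy; case: ifP => _.
      rewrite mulr1 lerDr; apply: mulr_ge0 => //; by case/andP: (ha k).
    by rewrite addr0.
  rewrite big_split /=; apply: lerD.
    by rewrite -lee_fin -hsum; apply: psum_le_series => i; apply: mulr_ge0 => //; by case/andP: (ha i).
  by rewrite /p (big_ord_widen _ _ tM) [leRHS]big_mkcond.
have Xm : X <= m by rewrite le_min X2 andbT; have := psum_le M; lra.
have H1 : fs t m <= fs t X.
  apply: hmon => //; apply/andP; split => //; lra.
have H2 : (1 - \sum_(i < M) q i) * fs t 0 <= e.
  have := hrng 0; rewrite lexx ler01 => /(_ isT) /andP[_ h].
  have h' : 0 <= 1 - \sum_(i < M) q i by have := psum_le M; lra.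
  apply: (le_trans (ler_wpM2l h' h)); lra.
have H3 : \sum_(i < M) q i * fs t (yy i) <= \sum_(i < M) q i * fs i (a i).
  apply: ler_sum => i _; rewrite /yy; case: ifP => hit.
    rewrite ft1 mulr0; apply: mulr_ge0 => //; exact: fge0.
  apply: ler_wpM2l => //; apply: hmono => //; first by rewrite leqNgt hit.
apply: (le_trans (y := (\sum_(i < M) q i * fs i (a i) + e)%:E)).
  rewrite lee_fin; lra.
rewrite EFinD; apply: leeD2r; apply: psum_le_series => i.
apply: mulr_ge0 => //; exact: fge0.
Qed.

Lemma series_sub (R : realType) (u v : nat -> R) x y :
  (forall i, 0 <= u i) -> (forall i, 0 <= v i) ->
  (\sum_(i <oo) (u i + v i)%:E)%E = x%:E -> (\sum_(i <oo) (v i)%:E)%E = y%:E ->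
  (\sum_(i <oo) (u i)%:E)%E = (x - y)%:E.
Proof.
move=> u0 v0 h1 h2.
rewrite (@eq_eseriesr _ _ (fun i => (u i)%:E + (v i)%:E)%E) in h1; last by move=> i _; rewrite EFinD.
rewrite nneseriesD in h1; [|by move=> i _ _; rewrite lee_fin..].
by rewrite EFinB -h1 h2 addeK.
Qed.

Section P1.
Local Open Scope ereal_scope.

Lemma int01 (dT : measure_display) (T : measurableType dT) (R : realType)
  (P : probability T R) (phi : T -> R) :
  measurable_fun setT phi -> (forall x, (0 <= phi x <= 1)%R) ->
  \int[P]_x (phi x)%:E = (fine (\int[P]_x (phi x)%:E))%:E /\
  (0 <= fine (\int[P]_x (phi x)%:E) <= 1)%R.
Proof.
move=> mphi h.
have m' : measurable_fun setT (EFin \o phi) by apply/measurable_EFinP.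
have i0 : 0 <= \int[P]_x (phi x)%:E.
  by apply: integral_ge0 => x _; rewrite lee_fin; case/andP: (h x).
have i1 : \int[P]_x (phi x)%:E <= 1.
  have -> : 1 = \int[P]_x (cst 1%E x) by rewrite integral_cst // mul1e; exact/esym/probability_setT.
  apply: ge0_le_integral => //.
  - by move=> x _; rewrite lee_fin; case/andP: (h x).
  - by move=> x _; rewrite /= lee_fin; case/andP: (h x).
have fi : \int[P]_x (phi x)%:E \is a fin_num.
  by rewrite ge0_fin_numE // (le_lt_trans i1) // ltry.
split; first by rewrite fineK.
by rewrite -!lee_fin fineK // i0 i1.
Qed.

Lemma mix_integral (dT : measure_display) (T : measurableType dT) (R : realType)
  (D : Type) (M : nat -> D -> probability T R) (Mmix : D -> probability T R)
  (q : nat -> R) (hq0 : forall i, (0 <= q i)%R)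
  (hmix : forall (x : D) (A : set T), measurable A ->
            Mmix x A = (\sum_(i <oo) ((q i)%:E * M i x A))%E)
  x (phi : T -> R) : measurable_fun setT phi -> (forall y, (0 <= phi y)%R) ->
  \int[Mmix x]_y (phi y)%:E = \sum_(i <oo) ((q i)%:E * \int[M i x]_y (phi y)%:E).
Proof.
move=> mphi h.
have m' : measurable_fun setT (EFin \o phi) by apply/measurable_EFinP.
pose m_ := fun i => mscale (NngNum (hq0 i)) (M i x).
rewrite (eq_measure_integral (mseries m_ 0)); last first.
  move=> A mA _; apply: (etrans (hmix x A mA)); by [].
rewrite ge0_integral_measure_series //; last by move=> y _; rewrite lee_fin.
apply: eq_eseriesr => i _.
by rewrite ge0_integral_mscale // => y _; rewrite lee_fin.
Qed.
End P1.

Theorem lemma2 (dT : measure_display) (T : measurableType dT) (R : realType)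
  (D : Type) (M : nat -> D -> probability T R) (Mmix : D -> probability T R)
  (q : nat -> R) (fs : nat -> R -> R) (d d' : D)
  (hq0 : forall i, 0 <= q i)
  (hq1 : (\sum_(i <oo) (q i)%:E)%E = 1%E)
  (hmix : forall (x : D) (A : set T), measurable A ->
            Mmix x A = (\sum_(i <oo) ((q i)%:E * M i x A))%E)
  (hf : forall i, is_tradeoff_fun (fs i))
  (hT : forall i (alpha : R), 0 <= alpha <= 1 ->
          ((fs i alpha)%:E <= tradeoff (M i d) (M i d') alpha)%E)
  (hmono : forall i j (alpha : R), (i <= j)%N -> 0 <= alpha <= 1 ->
          fs i alpha <= fs j alpha)
  (t : nat) (alpha : R) (halpha : 0 <= alpha <= 1) :
  (mix_lower q fs alpha <= tradeoff (Mmix d) (Mmix d') alpha)%E /\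
  ((fs t (Num.min 1 (alpha + \sum_(i < t) q i)))%:E <= mix_lower q fs alpha)%E.
Proof.
split; last exact: (@part2 R q fs hq0 hq1 hf hmono t alpha halpha).
apply/ereal_infP => _ [phi [mphi phi01 hP] <-].
have phi0 : forall y, 0 <= phi y by move=> y; case/andP: (phi01 y).
pose a i := fine ((\int[M i d]_x (phi x)%:E)%E).
pose c i := fine ((\int[M i d']_x (phi x)%:E)%E).
have ha : forall i, (\int[M i d]_x (phi x)%:E)%E = (a i)%:E /\ 0 <= a i <= 1.
  by move=> i; exact: (@int01 _ _ _ (M i d) phi mphi phi01).
have hc : forall i, (\int[M i d']_x (phi x)%:E)%E = (c i)%:E /\ 0 <= c i <= 1.
  by move=> i; exact: (@int01 _ _ _ (M i d') phi mphi phi01).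
have [hA hA01] := @int01 _ _ _ (Mmix d) phi mphi phi01.
have [hC hC01] := @int01 _ _ _ (Mmix d') phi mphi phi01.
set A' := fine ((\int[Mmix d]_x (phi x)%:E)%E) in hA hA01.
set C' := fine ((\int[Mmix d']_x (phi x)%:E)%E) in hC hC01.
have fge0 : forall i x, 0 <= x <= 1 -> 0 <= fs i x.
  by move=> i x hx; case: (hf i) => _ _ _ h _; case/andP: (h x hx).
have qa0 : forall i, 0 <= q i * a i.
  by move=> i; apply: mulr_ge0 => //; case/andP: (proj2 (ha i)).
have qa1 : forall i, 0 <= q i * (1 - a i).
  by move=> i; apply: mulr_ge0 => //; case/andP: (proj2 (ha i)) => _ h; lra.
have qc0 : forall i, 0 <= q i * c i.
  by move=> i; apply: mulr_ge0 => //; case/andP: (proj2 (hc i)).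
have qc1 : forall i, 0 <= q i * (1 - c i).
  by move=> i; apply: mulr_ge0 => //; case/andP: (proj2 (hc i)) => _ h; lra.
have sA : (\sum_(i <oo) (q i * a i)%:E)%E = A'%:E.
  rewrite -hA (@mix_integral _ _ _ D M Mmix q hq0 hmix d phi mphi phi0).
  by apply: eq_eseriesr => i _; rewrite (proj1 (ha i)) EFinM.
have sC : (\sum_(i <oo) (q i * c i)%:E)%E = C'%:E.
  rewrite -hC (@mix_integral _ _ _ D M Mmix q hq0 hmix d' phi mphi phi0).
  by apply: eq_eseriesr => i _; rewrite (proj1 (hc i)) EFinM.
have sq : forall u : nat -> R, (\sum_(i <oo) (q i * (1 - u i) + q i * u i)%:E)%E = 1%:E.
  move=> u; rewrite -hq1; apply: eq_eseriesr => i _; congr (_%:E); ring.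
have s1 : (\sum_(i <oo) (q i * (1 - a i))%:E)%E = (1 - A')%:E.
  exact: (@series_sub R (fun i => q i * (1 - a i)) (fun i => q i * a i) 1 A' qa1 qa0 (sq a) sA).
have s2 : (\sum_(i <oo) (q i * (1 - c i))%:E)%E = (1 - C')%:E.
  exact: (@series_sub R (fun i => q i * (1 - c i)) (fun i => q i * c i) 1 C' qc1 qc0 (sq c) sC).
have hAa : A' <= alpha by rewrite -lee_fin -hA.
pose lam := if A' == 1 then 0 else (alpha - A') / (1 - A').
have [lam01 lamE] : 0 <= lam <= 1 /\ A' + lam * (1 - A') = alpha.
  rewrite /lam; case: eqP => [e1|hne].
    rewrite lexx ler01; split => //; move: hAa halpha; rewrite e1 => ? /andP[? ?]; lra.
  have pos : 0 < 1 - A'.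
    case/andP: hA01 => _ h; rewrite subr_gt0 lt_neqAle h andbT; exact/eqP.
  split; last by field; rewrite gt_eqF.
  apply/andP; split; first by apply: divr_ge0; lra.
  by rewrite ler_pdivrMr //; case/andP: halpha => _ ?; lra.
pose b i := a i + lam * (1 - a i).
have hb : forall i, (0 <= b i <= 1) /\ a i <= b i.
  move=> i; case/andP: (proj2 (ha i)) => h0 h1; case/andP: lam01 => l0 l1.
  rewrite /b; split; first (apply/andP; split); nra.
have sB : (\sum_(i <oo) (q i * b i)%:E)%E = alpha%:E.
  rewrite (@eq_eseriesr _ _ (fun i => (q i * a i)%:E + lam%:E * (q i * (1 - a i))%:E)%E); last first.
    by move=> i _; rewrite -EFinM -EFinD /b; congr (_%:E); ring.
  rewrite nneseriesD; last 2 first.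
  - by move=> i _ _; rewrite lee_fin.
  - by move=> i _ _; rewrite -EFinM lee_fin; apply: mulr_ge0 => //; case/andP: lam01.
  rewrite nneseriesZl; last by move=> i _; rewrite lee_fin.
  by rewrite sA s1 -EFinM -EFinD lamE.
rewrite /mix_lower.
apply: (le_trans (y := (\sum_(i <oo) (q i * fs i (b i))%:E)%E)).
  apply: ereal_inf_lbound; exists b => //; split => //; move=> i; exact: (proj1 (hb i)).
apply: (le_trans (y := (\sum_(i <oo) (q i * (1 - c i))%:E)%E)); last first.
  by rewrite s2 hC EFinB.
apply: lee_nneseries.
  by move=> i _ _; rewrite lee_fin; apply: mulr_ge0 => //; apply: fge0; exact: (proj1 (hb i)).
move=> i _; rewrite lee_fin; apply: ler_wpM2l => //.
have [hb01 hab] := hb i.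
have h1 : fs i (b i) <= fs i (a i).
  by case: (hf i) => _ _ hm _ _; apply: hm => //; exact: (proj2 (ha i)).
apply: (le_trans h1); rewrite -lee_fin.
apply: (le_trans (hT i (a i) (proj2 (ha i)))).
apply: ereal_inf_lbound; exists phi; first by split => //; rewrite (proj1 (ha i)).
by rewrite (proj1 (hc i)) EFinB.
Qed.
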